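(* Let $(G,d_G)$ be a connected finite metric graph and let $r\in G$. For $\alpha>0$ let $N_E(\alpha)$ denote the number of edges of $G$ of length at most $\alpha$. Then for any $d>0$ and any connected component $B$ of the set $B_{d,\alpha}=\{x\in G: d-\alpha\le d_G(r,x)\le d+\alpha\}$, \[ \operatorname{diam}(B)\le 4\,(2+N_E(4\alpha))\,\alpha, \] where the diameter is taken with respect to $d_G$.
   Context: A finite metric graph is the geometric realization of a finite 1-dimensional simplicial complex in which each edge is identified with a real segment $[a,b]$ (its length being $b-a$), endowed with the unique path metric $d_G$ whose restriction to each edge is the standard metric of the segment. *)

(* Defs.v *)
From HB Require Import structures.
From mathcomp Require Import all_boot all_order all_algebra.
From mathcomp Require Import boolp classical_sets reals.
Set Implicit Arguments. Unset Strict Implicit. Unset Printing Implicit Defensive.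
Import Order.TTheory GRing.Theory Num.Theory.
Local Open Scope ring_scope.
Local Open Scope classical_set_scope.

(* A finite metric graph: the geometric realization of a finite 1-dimensional
   simplicial complex (vertices V, edges E, no loops, no multiple edges),
   edge e identified with the segment [0, len e] (src e at 0, dst e at len e). *)
Record mgraph (R : realType) := MGraph {
  V : finType;
  E : finType;
  src : E -> V;
  dst : E -> V;
  len : E -> R;
  len_gt0 : forall e, 0 < len e;
  src_neq_dst : forall e, src e != dst e;
  simple : forall e e', [set src e; dst e]%SET = [set src e'; dst e']%SET -> e = e' }.

Section MG.
Variables (R : realType) (G : mgraph R).

(* Points of the geometric realization, in canonical form:
   a vertex, or an interior gpoint of an edge at parameter t in ]0, len e[. *)
Inductive gpoint := PV of V G | PE of E G & R.

Definition inG (x : gpoint) : Prop :=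
  match x with PV _ => True | PE e t => 0 < t < len e end.

Definition step_start (s : E G * bool) := if s.2 then src s.1 else dst s.1.
Definition step_end (s : E G * bool) := if s.2 then dst s.1 else src s.1.

Fixpoint walk (u v : V G) (p : seq (E G * bool)) : bool :=
  match p with
  | [::] => u == v
  | s :: p' => (step_start s == u) && walk (step_end s) v p'
  end.

Definition weight (p : seq (E G * bool)) : R := \sum_(s <- p) len s.1.

Definition dV (u v : V G) : R :=
  inf [set w | exists p, walk u v p /\ w = weight p].

Definition graph_connected : Prop := forall u v : V G, exists p, walk u v p.

(* The path metric d_G on the realization (shortest-path metric). *)
Definition dist (x y : gpoint) : R :=
  match x, y with
  | PV u, PV v => dV u v
  | PV u, PE e t => Num.min (dV u (src e) + t) (dV u (dst e) + (len e - t))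
  | PE e t, PV v => Num.min (t + dV (src e) v) ((len e - t) + dV (dst e) v)
  | PE e t, PE e' t' =>
      let via := Num.min
        (Num.min (t + dV (src e) (src e') + t')
                 (t + dV (src e) (dst e') + (len e' - t')))
        (Num.min ((len e - t) + dV (dst e) (src e') + t')
                 ((len e - t) + dV (dst e) (dst e') + (len e' - t'))) in
      if e == e' then Num.min `|t - t'| via else via
  end.

Definition gopen (U : set gpoint) : Prop :=
  forall x, inG x -> U x ->
    exists2 eps : R, 0 < eps & forall y, inG y -> dist x y < eps -> U y.

Definition gconnected (A : set gpoint) : Prop :=
  forall U W : set gpoint, gopen U -> gopen W ->
    A `<=` U `|` W -> A `&` U `&` W = set0 -> A `<=` U \/ A `<=` W.

Definition is_component (S B : set gpoint) : Prop :=
  [/\ B `<=` S, B !=set0, gconnected B &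
      forall C, B `<=` C -> C `<=` S -> gconnected C -> C = B].

Definition NE (a : R) : nat := #|[set e : E G | len e <= a]%SET|.

Definition annulus (r : gpoint) (d alpha : R) : set gpoint :=
  [set x | inG x /\ d - alpha <= dist r x <= d + alpha].

End MG.

(* Main.v *)
Require Import Defs.
From HB Require Import structures.
From mathcomp Require Import all_boot all_order all_algebra.
From mathcomp Require Import boolp classical_sets reals.
From mathcomp Require Import lra.
Import Order.TTheory GRing.Theory Num.Theory.
Local Open Scope ring_scope.
Local Open Scope classical_set_scope.

Lemma minP2 {R : realDomainType} (x y : R) : (Num.min x y = x /\ x <= y) \/ (Num.min x y = y /\ y <= x).
Proof. case: (leP x y) => h; [left|right]; split => //; exact: ltW. Qed.
Lemma maxP2 {R : realDomainType} (x y : R) : (Num.max x y = y /\ x <= y) \/ (Num.max x y = x /\ y <= x).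
Proof. case: (leP x y) => h; [left|right]; split => //; exact: ltW. Qed.

Lemma normP2 {R : realDomainType} (x : R) : (`|x| = x /\ 0 <= x) \/ (`|x| = - x /\ x <= 0).
Proof. case: (lerP 0 x) => h; [left|right]; split => //.
  by rewrite ger0_norm. by rewrite ltr0_norm. exact: ltW. Qed.

Ltac elim_mm := repeat match goal with
 | |- context [Num.min ?a ?b] => let m := fresh "m" in have := minP2 a b; set m := Num.min a b; clearbody m
 | |- context [Num.max ?a ?b] => let m := fresh "m" in have := maxP2 a b; set m := Num.max a b; clearbody m
 end.

Section P2.
Variable R : realType.
Implicit Types (x y z : R).

Definition Fp (L t0 a b s : R) : R := Num.min `|s - t0| (Num.min (s + a) (L - s + b)).

Lemma min4E (p q r w s k : R) : Num.min (Num.min (p + s) (q + k)) (Num.min (r + s) (w + k)) =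
  Num.min (s + Num.min p r) (k + Num.min q w).
Proof. elim_mm; lra. Qed.

Lemma eps_choose (xs : seq R) : exists2 e, 0 < e & forall x, x \in xs -> x <= 0 \/ e <= x.
Proof.
elim: xs => [|y xs [e he H]]; first by exists 1.
case: (lerP y 0) => hy.
  exists e => // x; rewrite inE => /orP[/eqP->|/H]; [by left|by []].
exists (Num.min y e); first by rewrite lt_min hy he.
move=> x; rewrite inE => /orP[/eqP->|/H[]]; [by right; rewrite ge_min lexx|by left|].
by move=> h; right; rewrite ge_min h orbT.
Qed.

Lemma Fp_le1 L t0 a b s : Fp L t0 a b s <= `|s - t0|.
Proof. by rewrite /Fp ge_min lexx. Qed.
Lemma Fp_le2 L t0 a b s : Fp L t0 a b s <= s + a.
Proof. by rewrite /Fp !ge_min lexx orbT. Qed.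
Lemma Fp_le3 L t0 a b s : Fp L t0 a b s <= L - s + b.
Proof. by rewrite /Fp !ge_min lexx !orbT. Qed.
Lemma Fp_cases L t0 a b s : Fp L t0 a b s = `|s - t0| \/ Fp L t0 a b s = s + a \/
   Fp L t0 a b s = L - s + b.
Proof.
rewrite /Fp; case: (minP2 (s + a) (L - s + b)) => [[E1 _]|[E1 _]]; rewrite E1.
  by case: (minP2 `|s - t0| (s + a)) => [[-> _]|[-> _]]; tauto.
by case: (minP2 `|s - t0| (L - s + b)) => [[-> _]|[-> _]]; tauto.
Qed.

Lemma Fp_lip L t0 a b s s' : Fp L t0 a b s' <= Fp L t0 a b s + `|s - s'|.
Proof.
have h1 := Fp_le1 L t0 a b s'; have h2 := Fp_le2 L t0 a b s'; have h3 := Fp_le3 L t0 a b s'.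
have h4 : `|s' - t0| <= `|s - t0| + `|s - s'|.
  by rewrite (_ : s' - t0 = (s - t0) - (s - s')) ?ler_normB //; lra.
have := ler_norml (s - s') `|s - s'|; rewrite lexx => /esym/andP[h5 h6].
case: (Fp_cases L t0 a b s) => [->|[->|->]]; lra.
Qed.

Lemma Fp_up L t0 a b hi eps u v s :
  0 < eps ->
  ((L + a + b) / 2 - hi <= 0 \/ eps <= (L + a + b) / 2 - hi) ->
  ((t0 + a) / 2 - hi <= 0 \/ eps <= (t0 + a) / 2 - hi) ->
  ((L + b - t0) / 2 - hi <= 0 \/ eps <= (L + b - t0) / 2 - hi) ->
  u <= s <= v -> v - u < eps -> Fp L t0 a b u <= hi -> Fp L t0 a b v <= hi ->
  Fp L t0 a b s <= hi.
Proof.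
move=> He H1 H2 H3 /andP[Hus Hsv] Huv Hu Hv; rewrite leNgt; apply/negP.
rewrite /Fp !lt_min !ltr_normr => /andP[/orP Hs1 /andP[Hs2 Hs3]].
move: Hu Hv; rewrite /Fp !ge_min !ler_norml.
move=> /orP[/andP[Hu1 Hu2]|/orP[Hu|Hu]] /orP[/andP[Hv1 Hv2]|/orP[Hv|Hv]];
  case: Hs1 => Hs1; lra.
Qed.

Lemma Fp_lo L t0 a b lo eps u v s :
  0 < eps -> (lo <= 0 \/ eps <= lo) ->
  u <= s <= v -> v - u < eps -> lo <= Fp L t0 a b u -> lo <= Fp L t0 a b v ->
  lo <= Fp L t0 a b s.
Proof.
move=> He H1 /andP[Hus Hsv] Huv; rewrite /Fp !le_min !ler_normr.
move=> /andP[/orP Hu1 /andP[Hu2 Hu3]] /andP[/orP Hv1 /andP[Hv2 Hv3]].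
apply/and3P; split; [|lra|lra].
case: H1 => H1; first by have := normr_ge0 (s - t0); lra.
apply/orP; case: Hu1 => Hu1; case: Hv1 => Hv1; lra.
Qed.

Lemma Fp_seg_local L t0 a b lo hi : exists2 eps, 0 < eps &
  forall u v s, `|u - v| < eps -> lo <= Fp L t0 a b u <= hi -> lo <= Fp L t0 a b v <= hi ->
  Num.min u v <= s <= Num.max u v -> lo <= Fp L t0 a b s <= hi.
Proof.
have [e he H] := eps_choose [:: (L + a + b) / 2 - hi; (t0 + a) / 2 - hi;
   (L + b - t0) / 2 - hi; lo].
have H1 := H _ (mem_head _ _).
have H2 : (t0 + a) / 2 - hi <= 0 \/ e <= (t0 + a) / 2 - hi by apply: H; rewrite !inE eqxx !orbT.
have H3 : (L + b - t0) / 2 - hi <= 0 \/ e <= (L + b - t0) / 2 - hi by apply: H; rewrite !inE eqxx !orbT.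
have H4 : lo <= 0 \/ e <= lo by apply: H; rewrite !inE eqxx !orbT.
exists e => // u v s Huv /andP[Hu1 Hu2] /andP[Hv1 Hv2].
case: (minP2 u v) => [[-> huv]|[-> hvu]]; case: (maxP2 u v) => [[-> ?]|[-> ?]] => Hs.
- have Huv' : v - u < e by move: Huv; rewrite distrC ger0_norm ?subr_ge0.
  apply/andP; split; [exact: (@Fp_lo L t0 a b lo e u v s he H4 Hs Huv' Hu1 Hv1)|exact: (@Fp_up L t0 a b hi e u v s he H1 H2 H3 Hs Huv' Hu2 Hv2)].
- have -> : s = u by move: Hs => /andP[]; lra.
  by rewrite Hu1 Hu2.
- have -> : s = v by move: Hs => /andP[]; lra.
  by rewrite Hv1 Hv2.
- have Huv' : u - v < e by move: Huv; rewrite ger0_norm ?subr_ge0.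
  apply/andP; split; [exact: (@Fp_lo L t0 a b lo e v u s he H4 Hs Huv' Hv1 Hu1)|exact: (@Fp_up L t0 a b hi e v u s he H1 H2 H3 Hs Huv' Hv2 Hu2)].
Qed.

Lemma tent_len (c K lo hi u v : R) :
  u <= v -> (forall s, u <= s <= v -> lo <= Num.min (s + c) (K - s) <= hi) ->
  v - u <= 2 * (hi - lo).
Proof.
move=> huv H.
have Hu := H u; rewrite lexx huv in Hu; have /andP[Hu1 Hu2] := Hu erefl.
have Hv := H v; rewrite lexx huv in Hv; have /andP[Hv1 Hv2] := Hv erefl.
move: Hu1 Hu2 Hv1 Hv2; rewrite !le_min !ge_min.
move=> /andP[Hu1 Hu3] /orP Hu2 /andP[Hv1 Hv3] /orP Hv2.
case: (lerP ((K - c) / 2) u) => hp1; first by case: Hu2; case: Hv2; lra.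
case: (lerP v ((K - c) / 2)) => hp2; first by case: Hu2; case: Hv2; lra.
have := H ((K - c) / 2); rewrite (ltW hp1) (ltW hp2) => /(_ erefl) /andP[_].
rewrite ge_min => /orP Hp.
case: Hp; lra.
Qed.

Lemma Fp_len (L t0 a b lo alpha u v : R) :
  t0 <= L -> 0 <= a -> 0 <= b -> Num.min t0 (L - t0) <= a -> Num.min t0 (L - t0) <= b ->
  0 < alpha -> - alpha < lo -> 0 <= u -> u <= v -> v <= L ->
  (forall s, u <= s <= v -> lo <= Fp L t0 a b s <= lo + 2 * alpha) ->
  v - u <= 4 * alpha.
Proof.
move=> ht0 ha hb hma hmb hal hlo hu huv hvL H.
case: (lerP t0 u) => hA.
  have := @tent_len (Num.min (- t0) a) (L + b) lo (lo + 2 * alpha) u v huv.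
  suff : forall s, u <= s <= v -> Fp L t0 a b s = Num.min (s + Num.min (- t0) a) (L + b - s).
    move=> E Ht; have : v - u <= 2 * (lo + 2 * alpha - lo); last lra.
    by apply: Ht => s hs; rewrite -E //; apply: H.
  move=> s /andP[hs1 hs2]; rewrite /Fp ger0_norm; last lra.
  move: hs1 hs2; elim_mm; lra.
case: (lerP v t0) => hB.
  have := @tent_len a (Num.min t0 (L + b)) lo (lo + 2 * alpha) u v huv.
  suff : forall s, u <= s <= v -> Fp L t0 a b s = Num.min (s + a) (Num.min t0 (L + b) - s).
    move=> E Ht; have : v - u <= 2 * (lo + 2 * alpha - lo); last lra.
    by apply: Ht => s hs; rewrite -E //; apply: H.
  move=> s /andP[hs1 hs2]; rewrite /Fp ler0_norm; last lra.
  move: hs1 hs2; elim_mm; lra.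
have H0 := H t0; rewrite (ltW hA) (ltW hB) in H0; have /andP[H01 _] := H0 erefl.
have hlo0 : lo <= 0 by have := Fp_le1 L t0 a b t0; rewrite subrr normr0; lra.
rewrite leNgt; apply/negP => hl.
pose x := (v - u) / 2. have hxd : x = (v - u) / 2 by []. clearbody x.
case: (lerP (t0 + x) v) => hq.
  have Hq := H (t0 + x); rewrite hq andbT in Hq.
  have /andP[_ Hq2] := Hq ltac:(lra).
  have hx : `|t0 + x - t0| = x by rewrite addrAC subrr add0r ger0_norm //; lra.
  move: Hq2; rewrite /Fp !ge_min hx.
  move: hmb; rewrite ge_min => /orP hmb.
  by move=> /orP[?|/orP[?|?]]; case: hmb => ?; lra.
have Hq := H (t0 - x).
have /andP[_ Hq2] := Hq ltac:(apply/andP; split; lra).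
have hx : `|t0 - x - t0| = x by rewrite addrAC subrr add0r normrN ger0_norm //; lra.
move: Hq2; rewrite /Fp !ge_min hx.
move: hma; rewrite ge_min => /orP hma.
by move=> /orP[?|/orP[?|?]]; case: hma => ?; lra.
Qed.

End P2.
Arguments Fp {R}. Arguments Fp_le1 {R}. Arguments Fp_le2 {R}. Arguments Fp_le3 {R}.
Arguments Fp_cases {R}. Arguments Fp_lip {R}. Arguments Fp_up {R}. Arguments Fp_lo {R}.
Arguments Fp_seg_local {R}. Arguments tent_len {R}. Arguments Fp_len {R}.
Arguments min4E {R}. Arguments eps_choose {R}.

Section P1.
Variables (R : realType) (G : mgraph R).
Hypothesis Gconn : graph_connected G.
Implicit Types (s : E G * bool) (p q : seq (E G * bool)) (u v w : V G) (e : E G).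

Lemma weight_cons s p : weight (s :: p) = len s.1 + weight p.
Proof. by rewrite /weight big_cons. Qed.

Lemma weight_cat p q : weight (p ++ q) = weight p + weight q.
Proof. by rewrite /weight big_cat. Qed.

Lemma weight_ge0 p : 0 <= weight p.
Proof.
elim: p => [|s p IH]; first by rewrite /weight big_nil.
rewrite weight_cons; apply: addr_ge0 => //; exact: ltW (len_gt0 _).
Qed.

Lemma walk_cat u v w p q : walk u v p -> walk v w q -> walk u w (p ++ q).
Proof.
elim: p u => [|s p IH] u /=; first by move/eqP->.
by case/andP=> -> Hp Hq; rewrite /= (IH _ Hp Hq).
Qed.

Definition wset (u v : V G) := [set w : R | exists p, walk u v p /\ w = weight p].

Lemma wset_n0 u v : wset u v !=set0.
Proof. have [p Hp] := Gconn u v; by exists (weight p), p. Qed.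

Lemma wset_lb u v : lbound (wset u v) 0.
Proof. move=> w [p [_ ->]]; exact: weight_ge0. Qed.

Lemma dV_ge0 u v : 0 <= dV u v.
Proof. apply: lb_le_inf; [exact: wset_n0 | exact: wset_lb]. Qed.

Lemma dV_le {u v p} : walk u v p -> dV u v <= weight p.
Proof.
move=> Hp; apply: (ge_inf (E := wset u v)); last by exists p.
by exists 0; exact: wset_lb.
Qed.

Lemma dV_refl u : dV u u = 0.
Proof.
apply/eqP; rewrite eq_le dV_ge0 andbT.
by have := @dV_le u u [::] (eqxx u); rewrite /weight big_nil.
Qed.

Lemma dV_sd e : dV (src e) (dst e) <= len e.
Proof.
have := @dV_le (src e) (dst e) [:: (e, true)].
rewrite weight_cons /weight big_nil addr0; apply.
by rewrite /= /step_start /step_end /= !eqxx.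
Qed.

Lemma dV_ds e : dV (dst e) (src e) <= len e.
Proof.
have := @dV_le (dst e) (src e) [:: (e, false)].
rewrite weight_cons /weight big_nil addr0; apply.
by rewrite /= /step_start /step_end /= !eqxx.
Qed.

Lemma dV_tri u v w : dV u w <= dV u v + dV v w.
Proof.
have H1 : forall q, walk v w q -> dV u w - weight q <= dV u v.
  move=> q Hq; apply: lb_le_inf; first exact: wset_n0.
  move=> z [p [Hp ->]]; rewrite lerBlDr -weight_cat.
  apply: dV_le; exact: walk_cat Hp Hq.
have H2 : dV u w - dV u v <= dV v w.
  apply: lb_le_inf; first exact: wset_n0.
  move=> z [q [Hq ->]]; have := H1 q Hq; lra.
lra.
Qed.

Definition mu := \big[Num.min/1]_(e : E G) len e.

Lemma mu_gt0 : 0 < mu.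
Proof.
rewrite /mu; elim/big_ind: _ => //; first by move=> x y hx hy; rewrite lt_min hx hy.
move=> e _; exact: len_gt0.
Qed.

Lemma mu_le e : mu <= len e.
Proof. by rewrite /mu (bigD1 e) //= ge_min lexx. Qed.

Lemma weight_mu u v p : u != v -> walk u v p -> mu <= weight p.
Proof.
case: p => [|s p] /=; first by move=> /negbTE -> .
move=> _ /andP[_ Hp]; rewrite weight_cons.
have := mu_le s.1; have := weight_ge0 p; lra.
Qed.

Lemma dV_mu u v : u != v -> mu <= dV u v.
Proof.
move=> huv; apply: lb_le_inf; first exact: wset_n0.
by move=> z [p [Hp ->]]; exact: (weight_mu _ _ _ huv Hp).
Qed.

Lemma dV_small u v : dV u v < mu -> u = v.
Proof. by move=> h; apply/eqP; apply: contraLR h => /dV_mu; rewrite -leNgt. Qed.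


End P1.

Section P3.
Variables (R : realType) (G : mgraph R).
Hypothesis Gconn : graph_connected G.
Implicit Types (s : E G * bool) (p q : seq (E G * bool)) (u v w : V G) (e : E G).
Variable (r : gpoint G).
Hypothesis hr : inG r.
Let dV_tri := @dV_tri R G Gconn. Let dV_ge0 := @dV_ge0 R G Gconn. Let dV_refl := @dV_refl R G Gconn.
Let dV_sd := @dV_sd R G. Let dV_ds := @dV_ds R G. Let dV_small := @dV_small R G Gconn.
Let dV_le := @dV_le R G. Let weight_ge0 := @weight_ge0 R G. Let walk_cat := @walk_cat R G.
Let mu := @mu R G. Let mu_gt0 := @mu_gt0 R G. Let mu_le := @mu_le R G. Let dV_mu := @dV_mu R G Gconn.

Definition pt e (s : R) : gpoint G :=
  if s == 0 then PV (src e) else if s == len e then PV (dst e) else PE e s.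

Lemma lenP e : 0 < len e. Proof. exact: len_gt0. Qed.
Arguments lenP : clear implicits.

Lemma pt0 e : pt e 0 = PV (src e). Proof. by rewrite /pt eqxx. Qed.
Lemma ptL e : pt e (len e) = PV (dst e).
Proof. by rewrite /pt eqxx (negbTE (lt0r_neq0 (lenP e))). Qed.
Lemma ptI e (t : R) : 0 < t < len e -> pt e t = PE e t.
Proof.
move=> /andP[h1 h2]; rewrite /pt (negbTE (lt0r_neq0 h1)).
by have -> : (t == len e) = false by apply/negbTE; rewrite lt_eqF.
Qed.
Lemma pt_cases {e} {t : R} : 0 <= t <= len e -> t = 0 \/ t = len e \/ 0 < t < len e.
Proof.
move=> /andP[h1 h2]; case: (eqVneq t 0) => [->|h0]; first by left.
case: (eqVneq t (len e)) => [->|hL]; first by right; left.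
by right; right; rewrite lt0r h0 h1 /= lt_neqAle hL h2.
Qed.
Lemma pt_inG {e} {t : R} : 0 <= t <= len e -> inG (pt e t).
Proof.
move=> h; case: (pt_cases h) => [->|[->|h']]; rewrite ?pt0 ?ptL //.
by rewrite ptI.
Qed.
Lemma pt_eqV {e} {t : R} v : 0 <= t <= len e -> pt e t = PV v ->
  (t = 0 /\ v = src e) \/ (t = len e /\ v = dst e).
Proof.
move=> h; case: (pt_cases h) => [->|[->|h']]; rewrite ?pt0 ?ptL ?ptI //.
- by case=> ->; left.
- by case=> ->; right.
Qed.
Lemma pt_eqE {e} {t : R} e' t' : 0 <= t <= len e -> pt e t = PE e' t' ->
  [/\ e' = e, t' = t & 0 < t < len e].
Proof.
move=> h; case: (pt_cases h) => [->|[->|h']]; rewrite ?pt0 ?ptL ?ptI //.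
by case=> <- <-; split.
Qed.

Lemma distVV u v : dist (PV u) (PV v) = dV u v. Proof. by []. Qed.

Lemma dist_rV_ge0 v : 0 <= dist r (PV v).
Proof.
case: r hr => [u|e0 t0] /=; first by move=> _; exact: dV_ge0.
move=> /andP[h1 h2]; rewrite le_min; apply/andP; split.
  by apply: addr_ge0; [exact: ltW|exact: dV_ge0].
by apply: addr_ge0; [rewrite subr_ge0; exact: ltW|exact: dV_ge0].
Qed.

Lemma profile e : exists t0, [/\ t0 <= len e,
   Num.min t0 (len e - t0) <= dist r (PV (src e)),
   Num.min t0 (len e - t0) <= dist r (PV (dst e)) &
   forall t, 0 <= t <= len e ->
     dist r (pt e t) = Fp (len e) t0 (dist r (PV (src e))) (dist r (PV (dst e))) t].
Proof.
have ha := dist_rV_ge0 (src e); have hb := dist_rV_ge0 (dst e).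
have hL := lenP e.
have hsd := dV_sd e; have hds := dV_ds e.
case Er: r hr ha hb => [u|e0 t0] /= hr' ha' hb'.
- exists (- dV u (src e)); split => //; try (rewrite ge_min; apply/orP; left; lra).
    lra.
  have T1 := dV_tri u (dst e) (src e); have T2 := dV_tri u (src e) (dst e).
  move=> t ht; case: (pt_cases ht) => [->|[->|hI]]; rewrite ?pt0 ?ptL ?ptI //= /Fp.
  + rewrite opprK ger0_norm; last lra.
    elim_mm; lra.
  + rewrite opprK ger0_norm; last lra.
    elim_mm; lra.
  + rewrite opprK ger0_norm; last lra.
    elim_mm; lra.
- move: hr'; rewrite /= => /andP[ht1 ht2].
  have X0 := dV_ge0 (src e0) (src e); have X1 := dV_ge0 (src e0) (dst e).
  have X2 := dV_ge0 (dst e0) (src e); have X3 := dV_ge0 (dst e0) (dst e).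
  have T1 := dV_tri (src e0) (dst e) (src e); have T2 := dV_tri (src e0) (src e) (dst e).
  have T3 := dV_tri (dst e0) (dst e) (src e); have T4 := dV_tri (dst e0) (src e) (dst e).
  case: (eqVneq e0 e) => [E0|N0].
  + subst e0. exists t0; split.
    * lra.
    * move: ha'; rewrite !dV_refl; elim_mm; lra.
    * move: hb'; rewrite !dV_refl; elim_mm; lra.
    move=> t ht; case: (pt_cases ht) => [->|[->|hI]]; rewrite ?pt0 ?ptL ?ptI //= /Fp.
    -- rewrite !dV_refl add0r normrN ger0_norm; last lra.
       move: ha' hb'; rewrite !dV_refl; elim_mm; lra.
    -- rewrite !dV_refl ger0_norm; last lra.
       move: ha' hb'; rewrite !dV_refl; elim_mm; lra.
    -- by rewrite eqxx min4E distrC.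
  + exists (- Num.min (t0 + dV (src e0) (src e)) (len e0 - t0 + dV (dst e0) (src e))).
    split => //; try (rewrite ge_min; apply/orP; left; lra).
      lra.
    move=> t ht; case: (pt_cases ht) => [->|[->|hI]]; rewrite ?pt0 ?ptL ?ptI //= /Fp.
    -- rewrite opprK ger0_norm; last lra.
       move: ha' hb'; elim_mm; lra.
    -- rewrite opprK ger0_norm; last lra.
       move: ha' hb'; elim_mm; lra.
    -- rewrite (negbTE N0) min4E opprK ger0_norm; last lra.
       move: ha' hb'; elim_mm; lra.
Qed.


Lemma near_pt (w : gpoint G) : inG w -> forall del, 0 < del -> exists2 eps, 0 < eps &
  forall y, inG y -> dist w y < eps -> y = w \/ exists e t t',
    [/\ 0 <= t <= len e, 0 <= t' <= len e, w = pt e t, y = pt e t' & `|t - t'| < del].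
Proof.
case: w => [v|e t] /= hw del hdel.
- have hmu := mu_gt0.
  exists (Num.min mu del); first by rewrite lt_min hmu hdel.
  case => [v'|e' t'] /= hy hd.
  + left; have hv : dV v v' < mu by move: hd; elim_mm; lra.
    by rewrite (dV_small _ _ hv).
  + right; move: hy => /andP[hy1 hy2].
    have X1 := dV_ge0 v (src e'); have X2 := dV_ge0 v (dst e').
    have [hs|hs] : dV v (src e') + t' < Num.min mu del \/ dV v (dst e') + (len e' - t') < Num.min mu del.
      by move: hd; elim_mm; lra.
    * have hv : dV v (src e') < mu by move: hs; elim_mm; lra.
      rewrite (dV_small _ _ hv); exists e', 0, t'; split.
      -- by rewrite lexx (ltW (lenP e')).
      -- by rewrite (ltW hy1) (ltW hy2).
      -- by rewrite pt0.
      -- by rewrite ptI // hy1 hy2.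
      -- rewrite add0r normrN ger0_norm; last exact: ltW.
         by move: hs; elim_mm; lra.
    * have hv : dV v (dst e') < mu by move: hs; elim_mm; lra.
      rewrite (dV_small _ _ hv); exists e', (len e'), t'; split.
      -- by rewrite lexx (ltW (lenP e')).
      -- by rewrite (ltW hy1) (ltW hy2).
      -- by rewrite ptL.
      -- by rewrite ptI // hy1 hy2.
      -- rewrite ger0_norm; last by rewrite subr_ge0; exact: ltW.
         by move: hs; elim_mm; lra.
- move: hw => /andP[hw1 hw2].
  exists (Num.min del (Num.min t (len e - t))); first by rewrite !lt_min hdel hw1 subr_gt0 hw2.
  case => [v'|e' t'] /= hy hd.
  + exfalso; have X1 := dV_ge0 (src e) v'; have X2 := dV_ge0 (dst e) v'.
    by move: hd; elim_mm; lra.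
  + move: hy => /andP[hy1 hy2].
    have X1 := dV_ge0 (src e) (src e'); have X2 := dV_ge0 (src e) (dst e').
    have X3 := dV_ge0 (dst e) (src e'); have X4 := dV_ge0 (dst e) (dst e').
    case: (eqVneq e e') => [E|N]; last first.
      by exfalso; move: hd; rewrite (negbTE N); elim_mm; lra.
    subst e'; move: hd; rewrite eqxx => hd.
    have hlt : `|t - t'| < del by move: hd; elim_mm; lra.
    right; exists e, t, t'; split => //.
    * by rewrite (ltW hw1) (ltW hw2).
    * by rewrite (ltW hy1) (ltW hy2).
    * by rewrite ptI // hw1 hw2.
    * by rewrite ptI // hy1 hy2.
Qed.

Definition anch (z : gpoint G) v (o : R) := (z = PV v /\ o = 0) \/
  exists e t, z = PE e t /\ ((v = src e /\ o = t) \/ (v = dst e /\ o = len e - t)).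

Lemma anch_dist z1 z2 v1 v2 o1 o2 : anch z1 v1 o1 -> anch z2 v2 o2 ->
  dist z1 z2 <= o1 + dV v1 v2 + o2.
Proof.
case=> [[-> ->]|[e1 [t1 [-> H1]]]] [[-> ->]|[e2 [t2 [-> H2]]]] /=.
- by rewrite add0r addr0.
- by case: H2 => [[-> ->]|[-> ->]]; elim_mm; lra.
- by case: H1 => [[-> ->]|[-> ->]]; elim_mm; lra.
- by case: (e1 == e2); case: H1 => [[-> ->]|[-> ->]]; case: H2 => [[-> ->]|[-> ->]];
    elim_mm; lra.
Qed.


Variables (d alpha : R).
Hypotheses (hd : 0 < d) (hal : 0 < alpha).

Definition inA (z : gpoint G) : bool := (d - alpha <= dist r z <= d + alpha).
Definition seg e (a b : R) := forall t, Num.min a b <= t <= Num.max a b -> inA (pt e t).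
Definition full e := seg e 0 (len e).
Definition Seg (y z : gpoint G) := exists e a b,
  [/\ 0 <= a <= len e, 0 <= b <= len e, y = pt e a, z = pt e b & seg e a b].

Lemma seg_sym e a b : seg e a b -> seg e b a.
Proof.
move=> H t /andP[h1 h2]; apply: H; apply/andP.
by move: h1 h2; elim_mm; lra.
Qed.

Arguments seg_sym {e a b}.

Lemma seg_trans e a b c : seg e a b -> seg e b c -> seg e a c.
Proof.
move=> H1 H2 t /andP[h1 h2].
have : (Num.min a b <= t /\ t <= Num.max a b) \/ (Num.min b c <= t /\ t <= Num.max b c).
  by move: h1 h2; elim_mm; lra.
by case=> [[h3 h4]|[h3 h4]]; [apply: H1|apply: H2]; apply/andP.
Qed.

Arguments seg_trans {e a b c}.

Lemma seg_refl_inA e a : seg e a a -> inA (pt e a).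
Proof. by move=> H; apply: H; apply/andP; elim_mm; lra. Qed.

Lemma seg_len e a b : 0 <= a <= len e -> 0 <= b <= len e -> seg e a b -> `|a - b| <= 4 * alpha.
Proof.
move=> /andP[ha1 ha2] /andP[hb1 hb2] H.
have hd' := hd; have hal' := hal.
have [t0 [ht0 hm1 hm2 Hp]] := profile e.
have hA := dist_rV_ge0 (src e); have hB := dist_rV_ge0 (dst e).
have K : forall t : R, Num.min a b <= t <= Num.max a b ->
    d - alpha <= Fp (len e) t0 (dist r (PV (src e))) (dist r (PV (dst e))) t <= d - alpha + 2 * alpha.
  move=> t hs; have := H t hs; rewrite /inA Hp; last first.
    by move: hs => /andP[]; elim_mm => *; apply/andP; split; lra.
  by move=> /andP[k1 k2]; apply/andP; split; lra.
have j1 : - alpha < d - alpha by lra.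
have j2 : 0 <= Num.min a b by elim_mm; lra.
have j3 : Num.min a b <= Num.max a b by elim_mm; lra.
have j4 : Num.max a b <= len e by elim_mm; lra.
have Hl := Fp_len _ _ _ _ _ _ _ _ ht0 hA hB hm1 hm2 hal j1 j2 j3 j4 K.
move: Hl; have := normP2 (a - b); elim_mm; lra.
Qed.

Lemma full_len e : full e -> len e <= 4 * alpha.
Proof.
move=> H; have hL := ltW (lenP e).
have h1 : (0:R) <= 0 <= len e by apply/andP; split.
have h2 : 0 <= len e <= len e by apply/andP; split.
by have := seg_len e 0 (len e) h1 h2 H; rewrite sub0r normrN ger0_norm.
Qed.


Definition att (z : gpoint G) v := z = PV v \/ exists e t, [/\ 0 <= t <= len e, z = pt e t &
  ((v = src e /\ seg e 0 t) \/ (v = dst e /\ seg e t (len e)))].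
Definition conn u v := exists p, walk u v p /\ forall st, st \in p -> full st.1.
Definition Q (x y : gpoint G) := (exists u v, [/\ att x u, conn u v & att y v]) \/ Seg x y.

Lemma conn_refl u : conn u u.
Proof. by exists [::]; split => //=. Qed.

Lemma conn_snoc u e b : conn u (if b then src e else dst e) -> full e ->
  conn u (if b then dst e else src e).
Proof.
move=> [p [Hp Hf]] He; exists (p ++ [:: (e, b)]); split.
  apply: walk_cat Hp _; by case: b => /=; rewrite /step_start /step_end /= !eqxx.
move=> st; rewrite mem_cat => /orP[/Hf //|]; by rewrite inE => /eqP ->.
Qed.

Lemma att_vertex w v : att (PV w) v ->
  w = v \/ exists e, full e /\ ((v = src e /\ w = dst e) \/ (v = dst e /\ w = src e)).
Proof.
case=> [[->]|[e [t [ht E H]]]]; first by left.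
case: (pt_eqV _ ht (esym E)) => [[Et Ew]|[Et Ew]]; subst t; case: H => [[Ev H]|[Ev H]].
- by left; rewrite Ew Ev.
- by right; exists e; split; [exact: H|right].
- by right; exists e; split; [exact: H|left].
- by left; rewrite Ew Ev.
Qed.

Arguments att_vertex {w v}.

Lemma conn_att_vertex u w v : conn u v -> att (PV w) v -> conn u w.
Proof.
move=> C /att_vertex [->//|[e [Hf [[Ev Ew]|[Ev Ew]]]]]; subst.
- exact: (conn_snoc u e true C Hf).
- exact: (conn_snoc u e false C Hf).
Qed.

Arguments conn_att_vertex {u w v}.

Lemma att_interior e t v : 0 < t < len e -> att (PE e t) v ->
  (v = src e /\ seg e 0 t) \/ (v = dst e /\ seg e t (len e)).
Proof.
move=> ht [//|[e' [t' [ht' E H]]]].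
by case: (pt_eqE _ _ ht' (esym E)) => -> -> _.
Qed.

Arguments att_interior {e t v}.

Lemma Seg_vertex_att w z : Seg (PV w) z -> att z w.
Proof.
move=> [e [a [b [ha hb E1 E2 hs]]]]; right; exists e, b; split => //.
case: (pt_eqV _ ha (esym E1)) => [[Ea Ew]|[Ea Ew]]; subst a w.
  by left.
by right; split => //; apply: seg_sym.
Qed.

Arguments Seg_vertex_att {w z}.

Lemma Q_vertex x w : Q x (PV w) -> exists u, att x u /\ conn u w.
Proof.
case=> [[u [v [Ax C Ay]]]|[e [a [b [ha hb Ex Ey hs]]]]].
  by exists u; split => //; exact: (conn_att_vertex C Ay).
exists w; split; last exact: conn_refl.
right; exists e, a; split => //.
case: (pt_eqV _ hb (esym Ey)) => [[Eb Ew]|[Eb Ew]]; subst b w.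
  by left; split => //; apply: seg_sym.
by right.
Qed.

Arguments Q_vertex {x w}.

Lemma Q_step x y z : Q x y -> Seg y z -> Q x z.
Proof.
move=> HQ HS; have HS' := HS.
move: HS => [e [a [b [ha hb Ey Ez hs]]]].
case: (pt_cases ha) => [Ea|[Ea|hI]].
- have Ey' : y = PV (src e) by rewrite Ey Ea pt0.
  rewrite Ey' in HQ HS'.
  have [u [Ax C]] := Q_vertex HQ.
  by left; exists u, (src e); split => //; apply: Seg_vertex_att.
- have Ey' : y = PV (dst e) by rewrite Ey Ea ptL.
  rewrite Ey' in HQ HS'.
  have [u [Ax C]] := Q_vertex HQ.
  by left; exists u, (dst e); split => //; apply: Seg_vertex_att.
- have Ey' : y = PE e a by rewrite Ey ptI.
  rewrite Ey' in HQ.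
  case: HQ => [[u [v [Ax C Ay]]]|[e1 [a1 [b1 [ha1 hb1 Ex Ey1 hs1]]]]].
    left; exists u, v; split => //; right; exists e, b; split => //.
    case: (att_interior hI Ay) => [[Ev H]|[Ev H]].
      by left; split => //; apply: seg_trans H hs.
    by right; split => //; apply: seg_trans (seg_sym hs) H.
  case: (pt_eqE _ _ hb1 (esym Ey1)) => E1 E2 _; subst e1 b1.
  by right; exists e, a1, b; split => //; apply: seg_trans hs1 hs.
Qed.

Arguments Q_step {x y z}.

Inductive reach (x : gpoint G) : gpoint G -> Prop :=
 | rch0 : reach x x
 | rchS y z : reach x y -> Seg y z -> reach x z.

Lemma reach_Q x y : inG x -> inA x -> reach x y -> Q x y.
Proof.
move=> hx hA; elim => [|y' z _ IH HS]; last exact: Q_step IH HS.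
case: x hx hA => [v|e t] /= hx hA.
  by left; exists v, v; split; [left|exact: conn_refl|left].
right; exists e, t, t; have Ep := ptI _ _ hx.
move: hx => /andP[h1 h2]; split.
- by apply/andP; split; apply: ltW.
- by apply/andP; split; apply: ltW.
- by rewrite Ep.
- by rewrite Ep.
- move=> t' ht'; have -> : t' = t by move: ht'; elim_mm; lra.
  by rewrite Ep.
Qed.

Lemma walk_avoid (F : {set E G}) e v p : forall u, walk u v p ->
  (forall st, st \in p -> st.1 \in F) ->
  (forall st, st \in p -> st.1 \in F :\ e) \/
  exists z q, [/\ z = src e \/ z = dst e, walk z v q & forall st, st \in q -> st.1 \in F :\ e].
Proof.
elim: p => [|s p IH] u /=.
  by move=> _ _; left.
move=> /andP[_ Hw] HF.
have HF' : forall st, st \in p -> st.1 \in F by move=> st hst; apply: HF; rewrite inE hst orbT.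
case: (IH _ Hw HF') => [Hp|Hr]; last by right.
case: (eqVneq s.1 e) => [Es|Ns].
  right; exists (step_end s), p; split => //.
  by rewrite /step_end -Es; case: s.2; [right|left].
left => st; rewrite inE => /orP[/eqP ->|/Hp //].
by rewrite in_setD1 Ns HF // inE eqxx.
Qed.

Lemma walk_bound (K : R) n : 0 <= K -> forall (F : {set E G}), #|F| = n ->
  (forall e, e \in F -> len e <= K) ->
  forall u v p, walk u v p -> (forall st, st \in p -> st.1 \in F) -> dV u v <= K * n%:R.
Proof.
move=> hK; elim: n => [|n IH] F hF HK u v [|s p] /=.
- by move=> /eqP -> _; rewrite dV_refl mulr0.
- move=> _ HF; have := HF s; rewrite inE eqxx => /(_ isT).
  by rewrite (cards0_eq hF) inE.
- move=> /eqP -> _; rewrite dV_refl; apply: mulr_ge0 => //; exact: ler0n.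
- move=> Hw HF.
  have hs : s.1 \in F by apply: HF; rewrite inE eqxx.
  have Hu : u = src s.1 \/ u = dst s.1.
    move: Hw => /andP[/eqP <- _]; rewrite /step_start; by case: s.2; [left|right].
  case: (walk_avoid F s.1 v (s :: p) u Hw HF) => [Hav|[z [q [Hz Hq HqF]]]].
    by have := Hav s (mem_head _ _); rewrite in_setD1 eqxx.
  have hF' : #|F :\ s.1| = n.
    by have := cardsD1 s.1 F; rewrite hs hF add1n => -[].
  have HK' : forall e, e \in F :\ s.1 -> len e <= K.
    by move=> e; rewrite in_setD1 => /andP[_ /HK].
  have H1 := IH (F :\ s.1) hF' HK' z v q Hq HqF.
  have hl := HK _ hs.
  have H2 : dV u z <= K.
    case: Hu => ->; case: Hz => ->; rewrite ?dV_refl //.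
    + exact: le_trans (dV_sd _) hl.
    + exact: le_trans (dV_ds _) hl.
  have := dV_tri u z v; rewrite -addn1 natrD mulrDr mulr1; lra.
Qed.

Definition Ffull : {set E G} := [set e | `[< full e >]]%SET.

Lemma conn_dV u v : conn u v -> dV u v <= 4 * alpha * (NE G (4 * alpha))%:R.
Proof.
have hal' := hal.
move=> [p [Hw Hf]].
have hK : 0 <= 4 * alpha by lra.
have HK : forall e, e \in Ffull -> len e <= 4 * alpha.
  by move=> e; rewrite inE => /asboolP /full_len.
have HF : forall st, st \in p -> st.1 \in Ffull.
  by move=> st hst; rewrite inE; apply/asboolP; exact: Hf.
have H := walk_bound (4 * alpha) #|Ffull| hK Ffull erefl HK u v p Hw HF.
apply: (le_trans H); apply: ler_wpM2l => //; rewrite ler_nat.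
rewrite /NE; apply: subset_leq_card; apply/fintype.subsetP => e; rewrite !inE.
exact: (full_len e).
Qed.

Lemma att_anch_l z v : att z v -> exists w o, anch z w o /\ o + dV w v <= 4 * alpha.
Proof.
have hal' := hal.
case=> [->|[e [t [ht -> H]]]].
  by exists v, 0; split; [left|rewrite dV_refl add0r; lra].
have hL := lenP e.
case: (pt_cases ht) => [Et|[Et|hI]].
- subst t; rewrite pt0; exists (src e), 0; split; first by left.
  case: H => [[-> _]|[-> Hs]]; rewrite ?dV_refl add0r; first lra.
  exact: le_trans (dV_sd e) (full_len _ Hs).
- subst t; rewrite ptL; exists (dst e), 0; split; first by left.
  case: H => [[-> Hs]|[-> _]]; rewrite ?dV_refl add0r; last lra.
  exact: le_trans (dV_ds e) (full_len _ Hs).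
- rewrite ptI //; move: (hI) => /andP[h1 h2].
  have hz : (0:R) <= 0 <= len e by apply/andP; split => //; exact: ltW.
  have hLL : 0 <= len e <= len e by apply/andP; split => //; exact: ltW.
  case: H => [[-> Hs]|[-> Hs]].
  + exists (src e), t; split; first by right; exists e, t; split => //; left.
    have := seg_len _ _ _ hz ht Hs; rewrite sub0r normrN ger0_norm ?dV_refl; last exact: ltW.
    lra.
  + exists (dst e), (len e - t); split; first by right; exists e, t; split => //; right.
    have := seg_len _ _ _ ht hLL Hs; rewrite distrC ger0_norm ?dV_refl; last lra.
    lra.
Qed.

Lemma att_anch_r z v : att z v -> exists w o, anch z w o /\ dV v w + o <= 4 * alpha.
Proof.
have hal' := hal.
case=> [->|[e [t [ht -> H]]]].
  by exists v, 0; split; [left|rewrite dV_refl add0r; lra].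
have hL := lenP e.
case: (pt_cases ht) => [Et|[Et|hI]].
- subst t; rewrite pt0; exists (src e), 0; split; first by left.
  case: H => [[-> _]|[-> Hs]]; rewrite ?dV_refl addr0; first lra.
  exact: le_trans (dV_ds e) (full_len _ Hs).
- subst t; rewrite ptL; exists (dst e), 0; split; first by left.
  case: H => [[-> Hs]|[-> _]]; rewrite ?dV_refl addr0; last lra.
  exact: le_trans (dV_sd e) (full_len _ Hs).
- rewrite ptI //; move: (hI) => /andP[h1 h2].
  have hz : (0:R) <= 0 <= len e by apply/andP; split => //; exact: ltW.
  have hLL : 0 <= len e <= len e by apply/andP; split => //; exact: ltW.
  case: H => [[-> Hs]|[-> Hs]].
  + exists (src e), t; split; first by right; exists e, t; split => //; left.
    have := seg_len _ _ _ hz ht Hs; rewrite sub0r normrN ger0_norm ?dV_refl; last exact: ltW.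
    lra.
  + exists (dst e), (len e - t); split; first by right; exists e, t; split => //; right.
    have := seg_len _ _ _ ht hLL Hs; rewrite distrC ger0_norm ?dV_refl; last lra.
    lra.
Qed.

Lemma dist_pt_same e a b : 0 <= a <= len e -> 0 <= b <= len e ->
  dist (pt e a) (pt e b) <= `|a - b|.
Proof.
move=> ha hb; have hL := lenP e.
have hsd := dV_sd e; have hds := dV_ds e.
case: (pt_cases ha) => [->|[->|hIa]]; case: (pt_cases hb) => [->|[->|hIb]];
  rewrite ?pt0 ?ptL ?distVV ?dV_refl ?subrr ?normr0 //.
- by rewrite sub0r normrN ger0_norm //; exact: ltW.
- have := anch_dist (PV (src e)) (PE e b) (src e) (src e) (0) (b).
  rewrite ptI // dV_refl !add0r normrN ger0_norm; last by case/andP: hIb => *; exact: ltW.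
  apply; [by left|by right; exists e, b; split => //; left].
- by rewrite subr0 ger0_norm //; exact: ltW.
- have := anch_dist (PV (dst e)) (PE e b) (dst e) (dst e) (0) (len e - b).
  rewrite ptI // dV_refl !add0r ger0_norm; last by case/andP: hIb => *; rewrite subr_ge0; exact: ltW.
  apply; [by left|by right; exists e, b; split => //; right].
- have := anch_dist (PE e a) (PV (src e)) (src e) (src e) (a) (0).
  rewrite ptI // dV_refl !addr0 subr0 ger0_norm; last by case/andP: hIa => *; exact: ltW.
  apply; [by right; exists e, a; split => //; left|by left].
- have := anch_dist (PE e a) (PV (dst e)) (dst e) (dst e) (len e - a) (0).
  rewrite ptI // dV_refl !addr0 distrC ger0_norm; last by case/andP: hIa => *; rewrite subr_ge0; exact: ltW.
  apply; [by right; exists e, a; split => //; right|by left].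
- by rewrite !ptI //= eqxx ge_min lexx.
Qed.

Lemma Q_bound x y : Q x y -> dist x y <= 4 * (2 + (NE G (4 * alpha))%:R) * alpha.
Proof.
have hal' := hal.
have hN : 0 <= alpha * (NE G (4 * alpha))%:R by apply: mulr_ge0; [exact: ltW|exact: ler0n].
case=> [[u [v [Ax C Ay]]]|[e [a [b [ha hb -> -> hs]]]]].
  have [wx [ox [hx1 hx2]]] := att_anch_l _ _ Ax.
  have [wy [oy [hy1 hy2]]] := att_anch_r _ _ Ay.
  have D := anch_dist _ _ _ _ _ _ hx1 hy1.
  have T1 := dV_tri wx u wy; have T2 := dV_tri u v wy.
  have := conn_dV _ _ C.
  rewrite -mulrA; lra.
have := dist_pt_same _ _ _ ha hb; have := seg_len _ _ _ ha hb hs.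
lra.
Qed.

Lemma edge_seg_local e : exists2 eps, 0 < eps & forall a b, 0 <= a <= len e -> 0 <= b <= len e ->
  inA (pt e a) -> inA (pt e b) -> `|a - b| < eps -> seg e a b.
Proof.
have [t0 [ht0 hm1 hm2 Hp]] := profile e.
have [eps he H] := Fp_seg_local (len e) t0 (dist r (PV (src e))) (dist r (PV (dst e)))
  (d - alpha) (d + alpha).
exists eps => // a b ha hb hA hB hab t ht.
have htL : 0 <= t <= len e.
  move: (ha) (hb) => /andP[ha1 ha2] /andP[hb1 hb2].
  have /andP[k1 k2] := ht.
  by apply/andP; split; move: k1 k2; elim_mm; lra.
rewrite /inA Hp //; apply: H ht.
- exact: hab.
- by rewrite -Hp.
- by rewrite -Hp.
Qed.

Lemma unif_seg_local : exists2 eps, 0 < eps & forall e a b, 0 <= a <= len e -> 0 <= b <= len e ->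
  inA (pt e a) -> inA (pt e b) -> `|a - b| < eps -> seg e a b.
Proof.
have H : forall e, exists eps, 0 < eps /\ forall a b, 0 <= a <= len e -> 0 <= b <= len e ->
  inA (pt e a) -> inA (pt e b) -> `|a - b| < eps -> seg e a b.
  by move=> e; have [eps he H] := edge_seg_local e; exists eps.
have [f hf] := choice H.
exists (\big[Num.min/1]_(e : E G) f e).
  elim/big_ind: _ => //; first by move=> x y hx hy; rewrite lt_min hx hy.
  by move=> e _; case: (hf e).
move=> e a b ha hb hA hB hab; have [_ He] := hf e; apply: He => //.
apply: (lt_le_trans hab); by rewrite (bigD1 e) //= ge_min lexx.
Qed.

Lemma Seg_sym y z : Seg y z -> Seg z y.
Proof.
by move=> [e [a [b [ha hb E1 E2 hs]]]]; exists e, b, a; split => //; apply: seg_sym.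
Qed.

Lemma local_A (w : gpoint G) : inG w -> inA w -> exists2 eps, 0 < eps &
  forall y, inG y -> inA y -> dist w y < eps -> y = w \/ Seg w y.
Proof.
move=> hw hA.
have [del hdel Hs] := unif_seg_local.
have [eps he H] := near_pt w hw del hdel.
exists eps => // y hy hyA hwy.
case: (H y hy hwy) => [->|[e [t [t' [ht ht' Ew Ey hlt]]]]]; first by left.
right; exists e, t, t'; split => //.
by apply: Hs => //; [rewrite -Ew|rewrite -Ey].
Qed.

Lemma closed_A (w : gpoint G) : inG w -> ~~ inA w -> exists2 eps, 0 < eps &
  forall y, inG y -> dist w y < eps -> ~~ inA y.
Proof.
move=> hw hA.
have [h1|h2] : dist r w < d - alpha \/ d + alpha < dist r w.
  by move: hA; rewrite /inA negb_and -!ltNge => /orP.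
- have hdel : 0 < d - alpha - dist r w by lra.
  have [eps he H] := near_pt w hw _ hdel.
  exists eps => // y hy hwy.
  case: (H y hy hwy) => [->//|[e [t [t' [ht ht' Ew Ey hlt]]]]].
  have [t0 [_ _ _ Hp]] := profile e.
  have := Fp_lip (len e) t0 (dist r (PV (src e))) (dist r (PV (dst e))) t t'.
  rewrite -!Hp // -Ew -Ey /inA => hl.
  apply/negP => /andP[k1 k2]; lra.
- have hdel : 0 < dist r w - (d + alpha) by lra.
  have [eps he H] := near_pt w hw _ hdel.
  exists eps => // y hy hwy.
  case: (H y hy hwy) => [->//|[e [t [t' [ht ht' Ew Ey hlt]]]]].
  have [t0 [_ _ _ Hp]] := profile e.
  have := Fp_lip (len e) t0 (dist r (PV (src e))) (dist r (PV (dst e))) t' t.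
  rewrite -!Hp // -Ew -Ey /inA distrC => hl.
  apply/negP => /andP[k1 k2]; lra.
Qed.

Lemma reach_inAG x z : inG x -> inA x -> reach x z -> inG z /\ inA z.
Proof.
move=> hx hA; elim => [//|y z' _ _ [e [a [b [ha hb _ -> hs]]]]].
split; first exact: pt_inG hb.
by apply: hs; apply/andP; elim_mm; lra.
Qed.

Lemma main_sec (B : set (gpoint G)) : is_component (annulus r d alpha) B ->
  forall x y, B x -> B y -> dist x y <= 4 * (2 + (NE G (4 * alpha))%:R) * alpha.
Proof.
move=> [BS _ Bconn _] x y Bx By.
have [hxG hxA] := BS x Bx.
pose U := fun z => inG z /\ (reach x z \/ ~~ inA z).
pose W := fun z => inG z /\ (~ reach x z \/ ~~ inA z).
have oU : gopen U.
  move=> z hz [_ [Hl|Hn]].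
  - have [_ hzA] := reach_inAG _ _ hxG hxA Hl.
    have [eps he H] := local_A _ hz hzA.
    exists eps => // y' hy hdy; split => //.
    case: (boolP (inA y')) => hyA; last by right.
    case: (H y' hy hyA hdy) => [->|HS]; [by left|left; exact: (@rchS x _ _ Hl HS)].
  - have [eps he H] := closed_A _ hz Hn.
    by exists eps => // y' hy hdy; split => //; right; exact: H.
have oW : gopen W.
  move=> z hz [_ Hz].
  case: (boolP (inA z)) => hzA; last first.
    have [eps he H] := closed_A _ hz hzA.
    by exists eps => // y' hy hdy; split => //; right; exact: H.
  have Hl : ~ reach x z by case: Hz => // /negP.
  have [eps he H] := local_A _ hz hzA.
  exists eps => // y' hy hdy; split => //.
  case: (boolP (inA y')) => hyA; last by right.
  left => Hr.
  case: (H y' hy hyA hdy) => [E|HS]; first by apply: Hl; rewrite -E.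
  by apply: Hl; exact: (@rchS x _ _ Hr (Seg_sym _ _ HS)).
have cover : B `<=` U `|` W.
  move=> z Bz; have [hz _] := BS z Bz.
  by case: (pselect (reach x z)) => H; [left|right]; split => //; left.
have disj : B `&` U `&` W = set0.
  apply/seteqP; split => z; last by [].
  move=> [[Bz [_ H1]] [_ H2]]; have [_ hzA] := BS z Bz.
  have hzA' : inA z := hzA.
  case: H1 => H1; case: H2 => H2; [exact: H2 H1|by rewrite hzA' in H2|by rewrite hzA' in H1|by rewrite hzA' in H1].
case: (Bconn U W oU oW cover disj) => HB.
  have [_ [Hy|Hy]] := HB y By.
    exact: (Q_bound _ _ (reach_Q _ _ hxG hxA Hy)).
  by have [_ hyA] := BS y By; have hyA' : inA y := hyA; rewrite hyA' in Hy.
have [_ [Hx|Hx]] := HB x Bx; first by exfalso; apply: Hx; exact: (rch0 x).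
by have hxA' : inA x := hxA; rewrite hxA' in Hx.
Qed.

End P3.

Theorem lemma7 (R : realType) (G : mgraph R) (Gconn : graph_connected G)
  (r : gpoint G) (hr : inG r) (alpha d : R) (halpha : 0 < alpha) (hd : 0 < d)
  (B : set (gpoint G)) (hB : is_component (annulus r d alpha) B) :
  forall x y, B x -> B y ->
    dist x y <= 4 * (2 + (NE G (4 * alpha))%:R) * alpha.
Proof.
move=> x y Bx By.
exact: (@main_sec R G Gconn r hr d alpha hd halpha B hB x y Bx By).
Qed.
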